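(* Let $M\ge0$ and $\kappa\ge1$ be integers. Let $x(t)=\sum_{\gamma\in F}q_\gamma(t)e^{2\pi i\gamma t}$, $t\in\mathbb R$, where $F$ is a finite subset of $[0,1)$ of cardinality $\kappa$ and each $q_\gamma$ is a non-zero complex polynomial of degree at most $M$. Then $x$ can be completely recovered from its values $x(\ell)$, $\ell=0,1,\dots,2\kappa(M+1)-1$; that is, if $\tilde x(t)=\sum_{\gamma\in\tilde F}\tilde q_\gamma(t)e^{2\pi i\gamma t}$ is another function of the same form (with $\tilde F\subseteq[0,1)$ of cardinality $\kappa$ and non-zero polynomials $\tilde q_\gamma$ of degree at most $M$) with $\tilde x(\ell)=x(\ell)$ for $\ell=0,\dots,2\kappa(M+1)-1$, then $\tilde F=F$ and $\tilde q_\gamma=q_\gamma$ for all $\gamma\in F$. *)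

(* Defs.v *)
From HB Require Import structures.
From mathcomp Require Import all_boot all_order all_algebra.
From mathcomp Require Import complex.
From mathcomp Require Import reals trigo.
Set Implicit Arguments. Unset Strict Implicit. Unset Printing Implicit Defensive.
Import Order.TTheory GRing.Theory Num.Theory.
Local Open Scope ring_scope.
Local Open Scope complex_scope.

Definition expi (R : realType) (theta : R) : R[i] := (cos theta +i* sin theta)%C.

Definition expsum (R : realType) (F : seq R) (q : R -> {poly R[i]}) (t : R) : R[i] :=
  \sum_(g <- F) (q g).[t%:C] * expi (2 * pi * g * t).

Definition admissible (R : realType) (M kappa : nat) (F : seq R)
    (q : R -> {poly R[i]}) : Prop :=
  [/\ uniq F, size F = kappa,
      (forall g, g \in F -> 0 <= g /\ g < 1)
    & (forall g, g \in F -> q g != 0 /\ (size (q g) <= M.+1)%N)].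

(* Main.v *)
Require Import Defs.
From HB Require Import structures.
From mathcomp Require Import all_boot all_order all_algebra.
From mathcomp Require Import complex.
From mathcomp Require Import reals trigo.
From mathcomp Require Import ring lra zify.
Import Order.TTheory GRing.Theory Num.Theory.
Local Open Scope ring_scope.

Section Key.
Variable C : numFieldType.
Implicit Types p : {poly C}.

Definition shp p := p \Po ('X + 1%:P).

Lemma size_shp p : size (shp p) = size p.
Proof. by rewrite /shp size_comp_poly2 // size_XaddC. Qed.

Lemma lc_shp p : lead_coef (shp p) = lead_coef p.
Proof.
rewrite /shp lead_coef_comp ?size_XaddC // lead_coefXaddC expr1n mulr1 //.
Qed.

Lemma shpE p (x : C) : (shp p).[x] = p.[x + 1].
Proof. by rewrite /shp horner_comp !hornerE. Qed.

Lemma size_shp_sub p : p != 0 -> (size (shp p - p)%R < size p)%N.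
Proof.
move=> p0; have sp : (0 < size p)%N by rewrite size_poly_gt0.
rewrite -(prednK sp) ltnS; apply/leq_sizeP => j hj.
rewrite coefB; have [->|hne] := eqVneq j (size p).-1.
  by rewrite -!lead_coefE -{1}(size_shp p) -lead_coefE lc_shp subrr.
have h1 : (size p <= j)%N.
  by rewrite -(prednK sp); rewrite leq_eqVlt eq_sym (negbTE hne) in hj.
rewrite nth_default; last by rewrite size_shp.
by rewrite nth_default ?subrr.
Qed.

Lemma size_lin (a b : C) p : (size (a *: shp p - b *: p)%R <= size p)%N.
Proof.
apply: leq_trans (size_polyD _ _) _; rewrite size_polyN geq_max.
by rewrite (leq_trans (size_scale_leq _ _)) ?size_shp // size_scale_leq.
Qed.

Lemma lin_eq0 (a b : C) p : a != b -> a *: shp p - b *: p = 0 -> p = 0.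
Proof.
move=> ab h; apply/eqP; apply: contraT => p0.
have : (a *: shp p - b *: p)`_(size p).-1 = 0 by rewrite h coef0.
rewrite coefB !coefZ -lead_coefE -{1}(size_shp p) -lead_coefE lc_shp -mulrBl.
move/eqP; rewrite mulf_eq0 subr_eq0 (negbTE ab) lead_coef_eq0 (negbTE p0).
by [].
Qed.


Lemma key (T : eqType) (U : seq T) (z : T -> C) : uniq U -> {in U &, injective z} ->
  (forall a, a \in U -> z a != 0) -> forall D (p : T -> {poly C}),
  (\sum_(a <- U) size (p a) <= D)%N ->
  (forall l, (l < D)%N -> \sum_(a <- U) (p a).[l%:R] * z a ^+ l = 0) ->
  forall a, a \in U -> p a = 0.
Proof.
move=> uU zI z0; elim=> [|D IH] p hs hv.
  move=> a aU; apply/eqP; rewrite -size_poly_eq0.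
  by move: hs; rewrite leqn0 sum_nat_seq_eq0 => /allP/(_ a aU).
case: (boolP (has (fun a => p a != 0) U)); last first.
  by move/hasPn=> h a /h; rewrite negbK => /eqP.
case/hasP => j jU pj0.
pose p' a := z a *: shp (p a) - z j *: p a.
have hs' : (\sum_(a <- U) size (p' a) <= D)%N.
  rewrite (bigD1_seq j) //=.
  have -> : p' j = z j *: (shp (p j) - p j) by rewrite /p' scalerBr.
  have h1 : (size (z j *: (shp (p j) - p j)) < size (p j))%N :=
    leq_ltn_trans (size_scale_leq _ _) (size_shp_sub _ pj0).
  have h2 : (\sum_(a <- U | a != j) size (p' a) <= \sum_(a <- U | a != j) size (p a))%N.
    by apply: leq_sum => a _; exact: size_lin.
  move: hs; rewrite (bigD1_seq j) //= => hs.
  rewrite -ltnS; apply: leq_trans hs; rewrite -addSn; exact: leq_add.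
have hv' : forall l, (l < D)%N -> \sum_(a <- U) (p' a).[l%:R] * z a ^+ l = 0.
  move=> l lD.
  have e : \sum_(a <- U) (p' a).[l%:R] * z a ^+ l =
     \sum_(a <- U) (p a).[l.+1%:R] * z a ^+ l.+1 - z j * \sum_(a <- U) (p a).[l%:R] * z a ^+ l.
    rewrite mulr_sumr -sumrB; apply: eq_bigr => a _.
    rewrite /p' hornerD hornerN !hornerZ shpE -natr1 exprS; ring.
  by rewrite e !hv ?mulr0 ?subrr // ltnW.
have hz := IH p' hs' hv'.
have others : forall a, a \in U -> a != j -> p a = 0.
  move=> a aU aj; apply: (@lin_eq0 (z a) (z j)); last exact: hz.
  by apply: contra aj => /eqP e; apply/eqP; exact: zI.
have pjs : forall l, (l <= D)%N -> (p j).[l%:R] * z j ^+ l = 0.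
  move=> l lD; rewrite -(hv l lD) (bigD1_seq j) //= big1_seq ?addr0 //.
  by move=> a /andP[aj aU]; rewrite others ?horner0 ?mul0r.
have sh0 : shp (p j) = p j.
  have := hz j jU; rewrite /p' -scalerBr => /eqP.
  by rewrite scaler_eq0 (negbTE (z0 j jU)) /= subr_eq0 => /eqP.
have pl : forall l, (p j).[l%:R] = 0.
  elim=> [|l IHl]; first by have := pjs 0%N (leq0n _); rewrite expr0 mulr1.
  by rewrite -natr1 -shpE sh0.
suff : false by [].
have := @max_poly_roots _ _ [seq i%:R | i <- iota 0 (size (p j))] pj0.
rewrite size_map size_iota ltnn; apply.
  by apply/allP => x /mapP[i _ ->]; apply/rootP; exact: pl.
by rewrite map_inj_uniq ?iota_uniq //; exact: (mulrIn (oner_neq0 C)).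
Qed.

End Key.

Section Ex.
Variable R : realType.

Lemma expiD (a b : R) : expi (a + b) = expi a * expi b.
Proof. by rewrite /expi cosD sinD /=; congr (_ +i* _)%C; ring. Qed.

Lemma expiX (a : R) (n : nat) : expi (a * n%:R) = expi a ^+ n.
Proof.
elim: n => [|n IH]; first by rewrite mulr0 expr0 /expi cos0 sin0.
by rewrite exprS -natr1 mulrDr mulr1 expiD IH mulrC.
Qed.

Lemma expi_neq0 (a : R) : expi a != 0.
Proof.
apply/eqP => -[hc hs]; have := cos2Dsin2 a; rewrite hc hs expr0n /= add0r.
by move/eqP; rewrite eq_sym oner_eq0.
Qed.

Lemma cos1_eq0 (d : R) : 0 <= d < 1 -> cos (2 * pi * d) = 1 -> d = 0.
Proof.
case/andP=> d0 d1 hc.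
have e : 2 * pi * d = pi * d + pi * d by ring.
move: hc; rewrite e cosD -!expr2 cos2sin2.
move=> h; have hs : sin (pi * d) ^+ 2 = 0 by lra.
move: hs => /eqP; rewrite sqrf_eq0 => /eqP hs.
apply/eqP; rewrite eq_le d0 andbT; apply: contraT; rewrite -ltNge => dpos.
have : 0 < sin (pi * d).
  apply: sin_gt0_pi; rewrite mulr_gt0 ?pi_gt0 //=.
  by rewrite -[X in _ < X]mulr1 ltr_pM2l ?pi_gt0.
by rewrite hs ltxx.
Qed.

Lemma expi_inj (a b : R) : 0 <= a < 1 -> 0 <= b < 1 ->
  expi (2 * pi * a) = expi (2 * pi * b) -> a = b.
Proof.
wlog ab : a b / a <= b.
  move=> H ha hb he; case: (leP a b) => h; first exact: H.
  by apply/esym/H => //; exact: ltW.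
move=> /andP[a0 a1] /andP[b0 b1] [hc hs].
suff : b - a = 0 by move/eqP; rewrite subr_eq0 => /eqP.
apply: cos1_eq0; first by apply/andP; split; lra.
have -> : 2 * pi * (b - a) = 2 * pi * b + - (2 * pi * a) by ring.
rewrite cosD cosN sinN hc hs; have := cos2Dsin2 (2 * pi * b); rewrite !expr2.
by rewrite mulrN opprK.
Qed.

End Ex.

Local Open Scope complex_scope.

Theorem corollary3p1 (R : realType) (M kappa : nat) (kappa_ge1 : (1 <= kappa)%N)
    (F F' : seq R) (q q' : R -> {poly R[i]}) :
  admissible M kappa F q -> admissible M kappa F' q' ->
  (forall l : nat, (l < 2 * kappa * M.+1)%N ->
     expsum F' q' l%:R = expsum F q l%:R) ->
  F' =i F /\ (forall g, g \in F -> q' g = q g).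
Proof.
move=> [uF sF rF qF] [uF' sF' rF' qF'] heq.
set U := undup (F ++ F').
have inU : forall g, (g \in U) = (g \in F) || (g \in F').
  by move=> g; rewrite mem_undup mem_cat.
pose z := fun g : R => expi (2 * pi * g).
pose p := fun g => (if g \in F' then q' g else 0) - (if g \in F then q g else 0).
have rU : forall g, g \in U -> 0 <= g < 1.
  by move=> g; rewrite inU => /orP[/rF|/rF'] [h1 h2]; rewrite h1 h2.
have sum_sub : forall (S : seq R) (f : R -> R[i]), uniq S -> {subset S <= U} ->
    \sum_(a <- U) (if a \in S then f a else 0) = \sum_(a <- S) f a.
  move=> S f uS sSU; rewrite -big_mkcond -big_filter; apply: perm_big.
  apply: uniq_perm; rewrite ?filter_uniq ?undup_uniq //.
  move=> a; rewrite mem_filter; apply/andP/idP => [[]//|aS]; split => //.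
  exact: sSU.
have Hinj : {in U &, injective z}.
  by move=> a b aU bU; exact: expi_inj (rU a aU) (rU b bU).
have Hz0 : forall a, a \in U -> z a != 0 by move=> a _; exact: expi_neq0.
have Hs : (\sum_(a <- U) size (p a) <= 2 * kappa * M.+1)%N.
  apply: (@leq_trans (\sum_(a <- U) M.+1)).
    rewrite big_seq [X in (_ <= X)%N]big_seq; apply: leq_sum => a aU.
    rewrite /p; apply: leq_trans (size_polyD _ _) _; rewrite size_polyN geq_max.
    apply/andP; split; case: ifP => h; rewrite ?size_poly0 //.
      exact: (qF' a h).2.
    exact: (qF a h).2.
  rewrite big_const_seq count_predT iter_addn_0 mulnC leq_mul2r.
  apply/orP; right; have := size_undup (F ++ F'); rewrite size_cat sF sF' -/U.
  lia.
have Hv : forall l, (l < 2 * kappa * M.+1)%N ->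
    \sum_(a <- U) (p a).[l%:R] * z a ^+ l = 0.
  move=> l hl.
  have e : forall g, (p g).[l%:R] * z g ^+ l =
     (if g \in F' then (q' g).[(l%:R)%:C] * expi (2 * pi * g * l%:R) else 0) -
     (if g \in F then (q g).[(l%:R)%:C] * expi (2 * pi * g * l%:R) else 0).
    move=> g; rewrite /p /z -expiX rmorph_nat hornerD hornerN mulrBl.
    by case: ifP; case: ifP; rewrite ?horner0 ?mul0r.
  rewrite (eq_bigr _ (fun g _ => e g)) sumrB !sum_sub //.
  - by apply/eqP; rewrite subr_eq0; apply/eqP; exact: (heq l hl).
  - by move=> g gF; rewrite inU gF ?orbT.
  - by move=> g gF; rewrite inU gF ?orbT.
have hz := @key R[i] R U z (undup_uniq _) Hinj Hz0 _ p Hs Hv.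
have FF' : forall g, g \in F -> g \in F' /\ q' g = q g.
  move=> g gF; have gU : g \in U by rewrite inU gF.
  have := hz g gU; rewrite /p gF.
  case: ifP => gF' h.
    by split => //; apply/eqP; rewrite -subr_eq0 h.
  exfalso; move: h; rewrite sub0r => /eqP; rewrite oppr_eq0 => /eqP h.
  by have := (qF g gF).1; rewrite h eqxx.
split; last by move=> g /FF' [].
have sz : (size F' <= size F)%N by rewrite sF sF'.
have [_ H] := uniq_min_size uF (fun g gF => (FF' g gF).1) sz.
move=> x; exact: esym (H x).
Qed.
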